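(* Let $l,m,N$ be positive integers with $m>l\ge 5$, let $\boldsymbol\sigma\in\mathrm{ir}(l)$, and let $B_1,\dots,B_N\in\Sigma_q^m$. If $\boldsymbol\sigma B_i\boldsymbol\sigma\in\mathrm{ir}(m+2l)$ for all $i\in[N]$, then $B_1\boldsymbol\sigma B_2\boldsymbol\sigma\cdots\boldsymbol\sigma B_N\in\mathrm{ir}(N(m+l)-l)$.
   Context: $\Sigma_q=\{0,\dots,q-1\}$, $q\ge3$; $[N]=\{1,\dots,N\}$. A string is irreducible if it has no substring of the form $\mathbf{a}\mathbf{a}$ with $1\le|\mathbf{a}|\le3$; $\mathrm{ir}(n)$ is the set of irreducible strings of length $n$ over $\Sigma_q$. *)

(* Defs.v *)
From mathcomp Require Import all_boot.
Set Implicit Arguments. Unset Strict Implicit. Unset Printing Implicit Defensive.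

(* Strings over Sigma_q = {0,...,q-1} are sequences of elements of 'I_q. *)

(* s contains a square a a with 1 <= |a| <= 3 as a (contiguous) substring *)
Definition has_short_square (T : eqType) (s : seq T) : bool :=
  [exists k : 'I_4, [exists i : 'I_(size s).+1,
     (0 < k) && (i + 2 * k <= size s) &&
     (take k (drop i s) == take k (drop (i + k) s))]].

Definition irreducible (T : eqType) (s : seq T) : bool := ~~ has_short_square s.

Definition ir (q n : nat) (s : seq 'I_q) : bool := (size s == n) && irreducible s.

(* B_1 sigma B_2 sigma ... sigma B_N for Bs = [:: B_1; ...; B_N] *)
Fixpoint join_with (T : Type) (sep : seq T) (Bs : seq (seq T)) : seq T :=
  match Bs with
  | [::] => [::]
  | [:: B] => B
  | B :: Bs' => B ++ sep ++ join_with sep Bs'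
  end.

(* Main.v *)
Require Import Defs.
From mathcomp Require Import all_boot.
From mathcomp Require Import zify.

Section Gen.
Variable (T : eqType) (x0 : T).

Lemma hssP (s : seq T) : reflect (exists k i, [/\ 0 < k, k < 4, i + 2 * k <= size s &
   forall t, t < k -> nth x0 s (i + t) = nth x0 s (i + k + t)]) (has_short_square s).
Proof.
apply: (iffP existsP).
- move=> [k /existsP [i /andP[/andP[k0 hi] /eqP e]]].
  exists (val k), (val i); split => //; first exact: ltn_ord.
  move=> t tk; have := congr1 (fun u => nth x0 u t) e.
  by rewrite /= !nth_take // !nth_drop ?addnA.
- move=> [k [i [k0 k4 hi h]]]; exists (Ordinal k4); apply/existsP.
  have ilt : i < (size s).+1 by lia.
  exists (Ordinal ilt); rewrite /= k0 hi /=; apply/eqP.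
  apply: (@eq_from_nth _ x0).
    rewrite !size_takel ?size_drop //; lia.
  move=> t; rewrite size_takel ?size_drop; last lia.
  move=> tk; rewrite !nth_take // !nth_drop; rewrite ?addnA; exact: h.
Qed.

Lemma irr_infix (a s c : seq T) : irreducible (a ++ s ++ c) -> irreducible s.
Proof.
rewrite /irreducible; apply: contra => /hssP [k [i [k0 k4 hi h]]].
apply/hssP; exists k, (size a + i); split => //.
  rewrite !size_cat; lia.
move=> t tk; rewrite -!addnA !nth_cat.
have -> : size a + (i + t) < size a = false by lia.
have -> : size a + (i + (k + t)) < size a = false by lia.
have -> : size a + (i + t) - size a < size s by lia.
have -> : size a + (i + (k + t)) - size a < size s by lia.
have -> : size a + (i + t) - size a = i + t by lia.
have -> : size a + (i + (k + t)) - size a = i + k + t by lia.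
exact: h.
Qed.

Lemma irr_overlap (a o c : seq T) : 5 <= size o ->
  irreducible (a ++ o) -> irreducible (o ++ c) -> irreducible (a ++ o ++ c).
Proof.
rewrite /irreducible => ho h1 h2; apply/negP => /hssP [k [i [k0 k4 hi h]]].
have [le|gt] := leqP (i + 2 * k) (size a + size o).
- move/negP: h1; apply; apply/hssP; exists k, i; split => //.
    by rewrite size_cat.
  move=> t tk; have := h t tk; rewrite catA !nth_cat size_cat.
  have -> : i + t < size a + size o by lia.
  by have -> : i + k + t < size a + size o by lia.
- move/negP: h2; apply; apply/hssP; exists k, (i - size a); split => //.
    move: hi; rewrite !size_cat; lia.
  move=> t tk; have := h t tk; rewrite !nth_cat.
  have -> : i + t < size a = false by lia.
  have -> : i + k + t < size a = false by lia.
  have -> : i + t - size a = i - size a + t by lia.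
  by have -> : i + k + t - size a = i - size a + k + t by lia.
Qed.

Lemma join_irr (sigma : seq T) (Bs : seq (seq T)) : 5 <= size sigma -> Bs != [::] ->
  (forall B, B \in Bs -> irreducible (sigma ++ B ++ sigma)) ->
  irreducible (sigma ++ join_with sigma Bs ++ sigma).
Proof.
move=> hs; elim: Bs => [//|B Bs IH] _ hB.
case: Bs IH hB => [|B' Bs] IH hB.
  by apply: hB; rewrite mem_seq1.
have -> : sigma ++ join_with sigma [:: B, B' & Bs] ++ sigma
  = (sigma ++ B) ++ sigma ++ (join_with sigma (B' :: Bs) ++ sigma).
  by rewrite /= -!catA.
apply: irr_overlap => //.
  rewrite -catA; apply: hB; exact: mem_head.
apply: IH => // X hX; apply: hB; by rewrite in_cons hX orbT.
Qed.

Lemma size_join (sigma : seq T) (Bs : seq (seq T)) m : Bs != [::] ->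
  (forall B, B \in Bs -> size B = m) ->
  size (join_with sigma Bs) + size sigma = size Bs * (m + size sigma).
Proof.
elim: Bs => [//|B Bs IH] _ hB.
case: Bs IH hB => [|B' Bs] IH hB.
  by rewrite /= hB ?mem_seq1 // mul1n.
have e : size (join_with sigma (B' :: Bs)) + size sigma = size (B' :: Bs) * (m + size sigma).
  by apply: IH => // X hX; apply: hB; rewrite in_cons hX orbT.
rewrite [join_with _ _]/= !size_cat hB ?mem_head //.
move: e; set n := size (B' :: Bs); rewrite [size (B :: _)]/= -/n mulSn; move=> e; rewrite /n /= in e *; nia.
Qed.

End Gen.

Theorem lemma3 (q l m N : nat) (sigma : seq 'I_q) (Bs : seq (seq 'I_q)) :
  3 <= q -> 5 <= l -> l < m -> 0 < N ->
  ir l sigma ->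
  size Bs = N ->
  (forall B, B \in Bs -> size B = m) ->
  (forall B, B \in Bs -> ir (m + 2 * l) (sigma ++ B ++ sigma)) ->
  ir (N * (m + l) - l) (join_with sigma Bs).
Proof.
move=> q3 l5 lm N0 /andP[/eqP hs _] hN hsz hir.
have q0 : 0 < q by lia.
have x0 : 'I_q := Ordinal q0.
have Bn : Bs != [::] by apply/eqP => E; move: hN; rewrite E /=; lia.
apply/andP; split.
  have := @size_join _ sigma Bs m Bn hsz; rewrite hs hN => e.
  by apply/eqP; rewrite -e addnK.
apply: (@irr_infix _ x0 sigma _ sigma).
apply: join_irr => //; first by rewrite hs.
by move=> B /hir /andP[].
Qed.
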